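(* Let $D$ and $X$ be real vector spaces, let $M(\cdot,\cdot)$ and $N(\cdot,\cdot)$ be symmetric bilinear forms on $D$ with $M$ positive definite, let $b_G(\cdot,\cdot)$ be a symmetric positive semidefinite bilinear form on $X$, and let $T:D\to X$ be linear with $b_G(Tu,Tv)=M(u,v)$ for all $u,v\in D$. Let $v_1,\dots,v_n\in D$ and $w_1,\dots,w_n\in X$ satisfy $b_G(w_i,T\phi)=N(v_i,\phi)$ for all $\phi\in D$, $i=1,\dots,n$. Assume that for every $v\in\operatorname{span}\{v_1,\dots,v_n\}$ there exists $\tilde u\in D$ with $M(\tilde u,\phi)=N(v,\phi)$ for all $\phi\in D$. Define the $n\times n$ matrices $$A_0=(M(v_i,v_j))_{i,j},\quad A_1=(N(v_i,v_j))_{i,j},\quad A_2=(b_G(w_i,w_j))_{i,j},$$ assume $A_1$ is positive definite, and let $\Lambda_n$ be the largest eigenvalue of $A_0x=\Lambda A_1x$. If $\rho>\Lambda_n$ and $\rho>0$, then the matrix $B:=A_0-2\rho A_1+\rho^2A_2$ is positive definite. *)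

(* Defs.v *)
From HB Require Import structures.
From mathcomp Require Import all_boot all_order all_algebra.
From mathcomp Require Import reals.
Set Implicit Arguments. Unset Strict Implicit. Unset Printing Implicit Defensive.
Import Order.TTheory GRing.Theory Num.Theory.
Local Open Scope ring_scope.

(* A real-valued form on V that is symmetric and linear in its first
   argument (hence bilinear). *)
Definition sym_bilinear_form (R : realType) (V : lmodType R) (B : V -> V -> R) :=
  (forall u v, B u v = B v u) /\
  (forall (a : R) (u v w : V), B (a *: u + v) w = a * B u w + B v w).

Definition posdef_form (R : realType) (V : lmodType R) (B : V -> V -> R) :=
  forall u : V, u != 0 -> 0 < B u u.

Definition possemidef_form (R : realType) (V : lmodType R) (B : V -> V -> R) :=
  forall u : V, 0 <= B u u.

Definition posdef_mx (R : realType) (n : nat) (A : 'M[R]_n) :=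
  A^T = A /\ forall x : 'cV[R]_n, x != 0 -> 0 < (x^T *m A *m x) 0 0.

Definition gen_eigenvalue (R : realType) (n : nat) (A0 A1 : 'M[R]_n) (Lam : R) :=
  exists x : 'cV[R]_n, x != 0 /\ A0 *m x = Lam *: (A1 *m x).

Definition largest_gen_eigenvalue (R : realType) (n : nat) (A0 A1 : 'M[R]_n) (Lam : R) :=
  gen_eigenvalue A0 A1 Lam /\ forall mu, gen_eigenvalue A0 A1 mu -> mu <= Lam.

(* Main.v *)
Require Import Defs.
From HB Require Import structures.
From mathcomp Require Import all_boot all_order all_algebra.
From mathcomp Require Import reals.
From mathcomp Require Import lra.
Import Order.TTheory GRing.Theory Num.Theory.
Local Open Scope ring_scope.

Section Forms.
Variables (R : realType) (V : lmodType R) (B : V -> V -> R).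
Hypothesis hB : sym_bilinear_form B.

Lemma fB0l w : B 0 w = 0.
Proof.
have := (hB.2 1 0 0 w); rewrite scale1r addr0 mul1r => h.
by apply: (addrI (B 0 w)); rewrite addr0 -h.
Qed.

Lemma fBDl u v w : B (u + v) w = B u w + B v w.
Proof. by have := hB.2 1 u v w; rewrite scale1r mul1r. Qed.

Lemma fBZl a u w : B (a *: u) w = a * B u w.
Proof. by have := hB.2 a u 0 w; rewrite addr0 fB0l addr0. Qed.

Lemma fBNl u w : B (- u) w = - B u w.
Proof. by rewrite -scaleN1r fBZl mulN1r. Qed.

Lemma fBBl u v w : B (u - v) w = B u w - B v w.
Proof. by rewrite fBDl fBNl. Qed.

Lemma fBDr u v w : B w (u + v) = B w u + B w v.
Proof. by rewrite hB.1 fBDl !(hB.1 w). Qed.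

Lemma fBZr a u w : B w (a *: u) = a * B w u.
Proof. by rewrite hB.1 fBZl (hB.1 w). Qed.

Lemma fBBr u v w : B w (u - v) = B w u - B w v.
Proof. by rewrite hB.1 fBBl !(hB.1 w). Qed.

Lemma fBsuml n (c : 'I_n -> R) (u : 'I_n -> V) y :
  B (\sum_(i < n) c i *: u i) y = \sum_(i < n) c i * B (u i) y.
Proof.
elim/big_rec2: _; first by rewrite fB0l.
by move=> i a b _ <-; rewrite fBDl fBZl.
Qed.

Lemma fBsumr n (c : 'I_n -> R) (u : 'I_n -> V) y :
  B y (\sum_(i < n) c i *: u i) = \sum_(i < n) c i * B y (u i).
Proof.
rewrite hB.1 fBsuml; apply: eq_bigr => i _; by rewrite hB.1.
Qed.

Lemma qformE n (u : 'I_n -> V) (x : 'cV[R]_n) :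
  (x^T *m (\matrix_(i < n, j < n) B (u i) (u j)) *m x) 0 0 =
  B (\sum_(i < n) x i 0 *: u i) (\sum_(i < n) x i 0 *: u i).
Proof.
rewrite mxE fBsuml; apply: eq_bigr => j _.
rewrite mxE fBsumr mulrC; congr (_ * _).
apply: eq_bigr => i _.
by rewrite !mxE (hB.1 (u j)).
Qed.

End Forms.

Section Q.
Variables (R : realType) (n : nat) (x : 'cV[R]_n).
Lemma qD (A B : 'M[R]_n) : (x^T *m (A + B) *m x) 0 0 = (x^T *m A *m x) 0 0 + (x^T *m B *m x) 0 0.
Proof. by rewrite mulmxDr mulmxDl [LHS]mxE. Qed.
Lemma qN (A B : 'M[R]_n) : (x^T *m (A - B) *m x) 0 0 = (x^T *m A *m x) 0 0 - (x^T *m B *m x) 0 0.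
Proof. by rewrite mulmxBr mulmxBl [LHS]mxE [X in _ + X]mxE. Qed.
Lemma qZ k (A : 'M[R]_n) : (x^T *m (k *: A) *m x) 0 0 = k * (x^T *m A *m x) 0 0.
Proof. by rewrite -scalemxAr -scalemxAl [LHS]mxE. Qed.
End Q.

Theorem lemma4p3 (R : realType) (D X : lmodType R)
  (M N : D -> D -> R) (bG : X -> X -> R) (T : D -> X)
  (n : nat) (v : 'I_n -> D) (w : 'I_n -> X) (Lam rho : R) :
  sym_bilinear_form M -> sym_bilinear_form N -> posdef_form M ->
  sym_bilinear_form bG -> possemidef_form bG ->
  (forall (a : R) (x y : D), T (a *: x + y) = a *: T x + T y) ->
  (forall x y : D, bG (T x) (T y) = M x y) ->
  (forall (i : 'I_n) (phi : D), bG (w i) (T phi) = N (v i) phi) ->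
  (forall c : 'I_n -> R, exists ut : D,
     forall phi : D, M ut phi = N (\sum_(i < n) c i *: v i) phi) ->
  posdef_mx (\matrix_(i < n, j < n) N (v i) (v j)) ->
  largest_gen_eigenvalue (\matrix_(i < n, j < n) M (v i) (v j))
                         (\matrix_(i < n, j < n) N (v i) (v j)) Lam ->
  Lam < rho -> 0 < rho ->
  posdef_mx ((\matrix_(i < n, j < n) M (v i) (v j))
             - (2 * rho) *: (\matrix_(i < n, j < n) N (v i) (v j))
             + (rho ^+ 2) *: (\matrix_(i < n, j < n) bG (w i) (w j))).
Proof.
move=> hM hN pM hb pb hT hTM hw hut pN [_ hLam] Lr r0.
split.
  apply/matrixP => i j; rewrite !mxE hM.1 hN.1 hb.1 //.
move=> x x0.
rewrite qD qN !qZ !qformE //.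
Show.
set vv := \sum_(i < n) x i 0 *: v i.
set ww := \sum_(i < n) x i 0 *: w i.
have [ut hu] := hut (fun i => x i 0).
have huv : forall phi, M ut phi = N vv phi by move=> phi; rewrite hu.
have hwT : forall phi, bG ww (T phi) = M ut phi.
  move=> phi; rewrite huv fBsuml // /vv fBsuml //.
  by apply: eq_bigr => i _; rewrite hw.
have Tz : T 0 = 0.
  have := hT 1 0 0; rewrite !scale1r addr0 => h.
  by apply: (addrI (T 0)); rewrite addr0 -h.
have TN : forall a, T (- a) = - T a.
  move=> a; have := hT (-1) a 0; rewrite addr0 Tz addr0 !scaleN1r //.
have bz := pb (ww - T ut).
rewrite fBBl // !fBBr // hwT hTM (hb.1 (T ut)) hwT in bz.
have bwge : M ut ut <= bG ww ww.
  move: bz; lra.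
have hy : M (vv - rho *: ut) (vv - rho *: ut) =
    M vv vv - 2 * rho * N vv vv + rho ^+ 2 * M ut ut.
  rewrite fBBl // !fBBr // !fBZl // !fBZr // -huv (hM.1 vv ut); lra.
have hpos : 0 <= rho ^+ 2 * (bG ww ww - M ut ut).
  by apply: mulr_ge0; [exact: sqr_ge0 | rewrite subr_ge0].
have [y0|ynz] := eqVneq (vv - rho *: ut) 0.
  exfalso.
  have : rho <= Lam.
    apply: hLam; exists x; split => //.
    apply/matrixP => i j; rewrite (ord1 j) !mxE.
    have e1 : \sum_k (\matrix_(i0, j0) M (v i0) (v j0)) i k * x k 0 = M (v i) vv.
      rewrite fBsumr //; apply: eq_bigr => k _; by rewrite mxE mulrC.
    have e2 : \sum_k (\matrix_(i0, j0) N (v i0) (v j0)) i k * x k 0 = N (v i) vv.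
      rewrite fBsumr //; apply: eq_bigr => k _; by rewrite mxE mulrC.
    rewrite e1 e2.
    have hv : vv = rho *: ut by apply/eqP; rewrite -subr_eq0 y0.
    by rewrite [in LHS]hv fBZr // hM.1 huv hN.1.
  by rewrite leNgt Lr.
have := pM _ ynz; rewrite hy => h.
move: hpos; rewrite mulrBr; lra.
Qed.
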